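(* Let $U$ be the open unit disc in $\mathbb{R}^2$, let $E\subset U$ be open with $M:=\partial E\cap U$ a $C^{1,1}$ curve in $U$, and assume $E\setminus\{0\}=E^{sc}$. Suppose there is $x\in M\setminus\{0\}$ with $x\in H:=\{(x_1,x_2)\in U: x_2>0\}$ and $\sin\sigma(x)=-1$. Then $E$ is not convex.
   Context: For measurable $E\subset U$ and $\tau\in(0,1)$, $L_E(\tau)=\mathscr{H}^1(E\cap\mathbb{S}^1_\tau)$ with $\mathbb{S}^1_\tau$ the centred circle of radius $\tau$; $p(E)=\{\tau: L_E(\tau)>0\}$; $E^{sc}=\bigcup_{\tau\in p(E)}C(\tau,\alpha_\tau)$ where $C(\tau,\alpha)=\{y\in\mathbb{S}^1_\tau:\langle y,e_1\rangle>\tau\cos\alpha\}$ for $\alpha<\pi$, $C(\tau,\pi)=\mathbb{S}^1_\tau$, and $2\alpha_\tau\tau=L_E(\tau)$. For $p\in M$, $n(p)$ is the inner unit normal to $E$ and $t(p)$ is the unit tangent chosen so that $\{t(p),n(p)\}$ is a positively oriented basis of $\mathbb{R}^2$; for $p\neq0$, $\sigma(p)$ is the angle measured anticlockwise from the position vector $p$ to $t(p)$ (defined modulo $2\pi$). *)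

(* Defs.v *)
From Stdlib Require Import Reals Lra List ClassicalEpsilon.
Open Scope R_scope.

Definition pt : Type := (R * R)%type.

Definition padd (p q : pt) : pt := (fst p + fst q, snd p + snd q).
Definition psub (p q : pt) : pt := (fst p - fst q, snd p - snd q).
Definition pscal (s : R) (p : pt) : pt := (s * fst p, s * snd p).
Definition dot (p q : pt) : R := fst p * fst q + snd p * snd q.
Definition pnorm (p : pt) : R := sqrt (dot p p).
Definition dist (p q : pt) : R := pnorm (psub p q).

Definition inU (p : pt) : Prop := pnorm p < 1.

Definition open2 (E : pt -> Prop) : Prop :=
  forall p, E p -> exists r, 0 < r /\ forall q, dist p q < r -> E q.

Definition boundary (E : pt -> Prop) (p : pt) : Prop :=
  (forall eps, 0 < eps -> exists q, E q /\ dist p q < eps) /\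
  (forall eps, 0 < eps -> exists q, ~ E q /\ dist p q < eps).

Definition bdryU (E : pt -> Prop) (p : pt) : Prop := boundary E p /\ inU p.

(* M is a C^{1,1} curve: locally (after a rotation) the graph of a C^1
   function with Lipschitz derivative *)
Definition C11_curve (M : pt -> Prop) : Prop :=
  forall p, M p ->
    exists r theta (f f' : R -> R),
      0 < r /\ f 0 = 0 /\
      (forall s, derivable_pt_lim f s (f' s)) /\
      (exists K, forall a b, Rabs (f' a - f' b) <= K * Rabs (a - b)) /\
      forall q, dist p q < r ->
        (M q <-> exists s,
            q = padd p (padd (pscal s (cos theta, sin theta))
                             (pscal (f s) (- sin theta, cos theta)))).

Definition circ (tau t : R) : pt := (tau * cos t, tau * sin t).

Fixpoint intervals_in (A : R -> Prop) (lo : R) (l : list (R * R)) : Prop :=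
  match l with
  | nil => True
  | (a, b) :: l' =>
      lo < a /\ a < b /\ b <= PI /\
      (forall t, a <= t <= b -> A t) /\ intervals_in A b l'
  end.

Fixpoint total_length (l : list (R * R)) : R :=
  match l with
  | nil => 0
  | (a, b) :: l' => (b - a) + total_length l'
  end.

Definition angle_set (E : pt -> Prop) (tau t : R) : Prop :=
  - PI < t <= PI /\ E (circ tau t).

Definition arc_sums (E : pt -> Prop) (tau : R) (x : R) : Prop :=
  exists l, intervals_in (angle_set E tau) (- PI) l /\
            x = tau * total_length l.

(* L_E(tau) = H^1(E ∩ S^1_tau), for open E computed by inner regularity as
   the supremum of lengths of finite unions of disjoint closed arcs in E *)
Definition L_E (E : pt -> Prop) (tau : R) : R :=
  epsilon (inhabits 0) (fun m => is_lub (arc_sums E tau) m).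

Definition pE (E : pt -> Prop) (tau : R) : Prop :=
  0 < tau < 1 /\ L_E E tau > 0.

Definition alpha_E (E : pt -> Prop) (tau : R) : R := L_E E tau / (2 * tau).

(* C(tau, alpha) : for alpha < PI the open arc centred on the positive
   e_1 axis; for alpha = PI the full circle *)
Definition Ccap (tau alpha : R) (y : pt) : Prop :=
  pnorm y = tau /\ (alpha < PI -> fst y > tau * cos alpha).

Definition Esc (E : pt -> Prop) (y : pt) : Prop :=
  exists tau, pE E tau /\ Ccap tau (alpha_E E tau) y.

Definition normal_at (M : pt -> Prop) (x n : pt) : Prop :=
  forall eps, 0 < eps -> exists delta, 0 < delta /\
    forall y, M y -> 0 < dist y x < delta ->
      Rabs (dot (psub y x) n) <= eps * dist y x.

Definition inner_dir (E : pt -> Prop) (x n : pt) : Prop :=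
  exists delta, 0 < delta /\
    forall s, 0 < s < delta -> E (padd x (pscal s n)) /\ ~ E (psub x (pscal s n)).

Definition rot (s : R) (p : pt) : pt :=
  (cos s * fst p - sin s * snd p, sin s * fst p + cos s * snd p).

Definition convex2 (E : pt -> Prop) : Prop :=
  forall a b lam, E a -> E b -> 0 <= lam <= 1 ->
    E (padd (pscal lam a) (pscal (1 - lam) b)).

(* Main.v *)
Require Import Defs.
From Stdlib Require Import Reals Lra Psatz Classical Nsatz.
Open Scope R_scope.


Lemma dot_ge0 p : 0 <= dot p p.
Proof. unfold dot; nra. Qed.

Lemma pn_lt p c : 0 <= c -> dot p p < c*c -> pnorm p < c.
Proof. intros. unfold pnorm. rewrite <- (sqrt_square c) by lra.
apply sqrt_lt_1_alt. split; [apply dot_ge0|lra]. Qed.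

Lemma pn_le p c : 0 <= c -> dot p p <= c*c -> pnorm p <= c.
Proof. intros. unfold pnorm. rewrite <- (sqrt_square c) by lra.
apply sqrt_le_1_alt. lra. Qed.

Lemma pn_ge p c : 0 <= c -> c*c <= dot p p -> c <= pnorm p.
Proof. intros. unfold pnorm. rewrite <- (sqrt_square c) by lra.
apply sqrt_le_1_alt. lra. Qed.

Lemma pn_scal s D : pnorm (pscal s D) = Rabs s * pnorm D.
Proof. destruct D as [d1 d2]. unfold pnorm, pscal, dot; simpl.
replace (s*d1*(s*d1) + s*d2*(s*d2)) with ((s*s)*(d1*d1+d2*d2)) by ring.
rewrite sqrt_mult_alt by nra. rewrite <- sqrt_Rsqr_abs. reflexivity. Qed.

Lemma pn_ge0 p : 0 <= pnorm p.
Proof. apply sqrt_pos. Qed.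

Lemma dist_seg P D l m :
  Defs.dist (padd P (pscal l D)) (padd P (pscal m D)) = Rabs (l - m) * pnorm D.
Proof. unfold Defs.dist. rewrite <- pn_scal. f_equal. destruct P, D; unfold psub, padd, pscal; simpl; f_equal; ring. Qed.

Lemma seg0 P D : padd P (pscal 0 D) = P.
Proof. destruct P, D; unfold padd, pscal; simpl; f_equal; ring. Qed.
Lemma seg1 P D : padd P (pscal 1 D) = padd P D.
Proof. destruct P, D; unfold padd, pscal; simpl; f_equal; ring. Qed.

Lemma crossing (E : pt -> Prop) P D : open2 E -> E P -> ~ E (padd P D) ->
  exists l, 0 <= l <= 1 /\ boundary E (padd P (pscal l D)).
Proof.
intros Hop HP HZ.
set (S := fun l => 0 <= l <= 1 /\ forall m, 0 <= m <= l -> E (padd P (pscal m D))).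
assert (Hb : bound S) by (exists 1; intros l [Hl _]; lra).
assert (Hn : exists l, S l).
{ exists 0; split; [lra|]. intros m Hm. replace m with 0 by lra. rewrite seg0; auto. }
destruct (completeness S Hb Hn) as [L [HL1 HL2]].
assert (HL0 : 0 <= L) by (apply HL1; split; [lra|]; intros m Hm; replace m with 0 by lra; rewrite seg0; auto).
assert (HL1' : L <= 1) by (apply HL2; intros l [Hl _]; lra).
assert (A : forall m, 0 <= m < L -> E (padd P (pscal m D))).
{ intros m Hm. apply NNPP; intro Hnm.
  assert (L <= m); [|lra]. apply HL2. intros l [Hl Hl2].
  destruct (Rle_lt_dec l m); auto. exfalso; apply Hnm, Hl2; lra. }
set (pD := pnorm D). assert (HpD : 0 <= pD) by apply pn_ge0.
assert (B : ~ E (padd P (pscal L D))).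
{ intro HEL. destruct (Hop _ HEL) as [rho [Hrho Hball]].
  assert (SL : forall m, 0 <= m <= L -> E (padd P (pscal m D))).
  { intros m Hm. destruct (Rlt_le_dec m L). apply A; lra. replace m with L by lra; auto. }
  destruct (Req_dec L 1) as [e|ne].
  { apply HZ. rewrite <- seg1, <- e. auto. }
  set (l' := Rmin 1 (L + rho / (2*(pD+1)))).
  assert (rho / (2*(pD+1)) > 0) by (apply Rdiv_lt_0_compat; lra).
  assert (l' <= L).
  { apply HL1. split. unfold l'; split; [apply Rmin_glb; lra| apply Rmin_l].
    intros m Hm. destruct (Rle_lt_dec m L). apply SL; lra.
    apply Hball. rewrite dist_seg. rewrite Rabs_left by lra.
    assert (m - L <= rho / (2*(pD+1))) by (assert (l' <= L + rho / (2*(pD+1))) by apply Rmin_r; lra).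
    apply Rle_lt_trans with (rho / (2*(pD+1)) * pD).
    apply Rmult_le_compat_r; lra.
    unfold Rdiv. 
    apply Rlt_le_trans with (rho * / (2 * (pD + 1)) * (2*(pD+1))).
    apply Rmult_lt_compat_l; [apply Rmult_lt_0_compat; [lra|apply Rinv_0_lt_compat; lra]|]. fold pD; lra.
    rewrite Rmult_assoc, Rinv_l by lra. lra. }
  assert (L < l'); [|lra]. unfold l'. apply Rmin_glb_lt; lra. }
exists L. split; [lra|]. split.
- intros eps Heps. destruct (Req_dec L 0) as [e|ne].
  + exists P. rewrite e, seg0. split; auto. unfold Defs.dist. apply Rle_lt_trans with 0; [|lra].
    apply pn_le; [lra|]. destruct P; unfold dot, psub; simpl; nra.
  + set (m := Rmax 0 (L - eps/(2*(pD+1)))).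
    assert (eps / (2*(pD+1)) > 0) by (apply Rdiv_lt_0_compat; lra).
    assert (0 <= m) by apply Rmax_l.
    assert (m < L) by (unfold m; apply Rmax_lub_lt; lra).
    assert (L - eps/(2*(pD+1)) <= m) by apply Rmax_r.
    exists (padd P (pscal m D)). split. apply A; lra.
    rewrite dist_seg, Rabs_right by lra.
    apply Rle_lt_trans with (eps / (2*(pD+1)) * pD).
    apply Rmult_le_compat_r; lra.
    unfold Rdiv.
    apply Rlt_le_trans with (eps * / (2 * (pD + 1)) * (2*(pD+1))).
    apply Rmult_lt_compat_l; [apply Rmult_lt_0_compat; [lra|apply Rinv_0_lt_compat; lra]|]. fold pD; lra.
    rewrite Rmult_assoc, Rinv_l by lra. lra.
- intros eps Heps. exists (padd P (pscal L D)). split; auto.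
  unfold Defs.dist. apply Rle_lt_trans with 0; [|lra].
  apply pn_le; [lra|]. destruct (padd P (pscal L D)); unfold dot, psub; simpl; nra.
Qed.

Lemma sym (E : pt -> Prop) : (forall y, (E y /\ y <> (0, 0)) <-> Esc E y) ->
  forall y, E y -> y <> (0,0) -> E (fst y, - snd y).
Proof.
intros H y Hy Hy0. destruct (proj1 (H y) (conj Hy Hy0)) as [tau [Hp [Hc1 Hc2]]].
assert (Hs : Esc E (fst y, - snd y)).
{ exists tau. split; auto. split.
  - rewrite <- Hc1. unfold pnorm, dot. destruct y; simpl. f_equal. ring.
  - simpl. auto. }
apply (proj2 (H _) Hs).
Qed.

Lemma core (E : pt -> Prop) (r n1 n2 : R) :
  0 < r -> r < 1 -> n1*n1+n2*n2 = 1 -> 0 < n2 ->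
  open2 E ->
  (forall y, E y -> y <> (0,0) -> E (fst y, - snd y)) ->
  normal_at (bdryU E) (r*n1, r*n2) (n1,n2) ->
  inner_dir E (r*n1, r*n2) (n1,n2) ->
  ~ convex2 E.
Proof.
intros Hr Hr1 Hn Hn2 Hop Hsym Hnorm [di [Hdi Hin]] Hconv.
unfold padd, psub, pscal in Hin; simpl in Hin.
assert (cone: forall K, 0 < K -> exists a1, 0 < a1 /\ forall a b, 0 < a < a1 -> Rabs b <= K*a ->
   E (r*n1 + a*n1 + b*n2, r*n2 + a*n2 - b*n1)).
{ intros K HK.
  assert (He : 0 < / (2*(1+K))) by (apply Rinv_0_lt_compat; lra).
  destruct (Hnorm _ He) as [dM [HdM HM]].
  exists (Rmin di (Rmin (dM/(2*(1+K))) ((1-r)/(2*(1+K))))).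
  split. { repeat apply Rmin_glb_lt; auto; apply Rdiv_lt_0_compat; lra. }
  intros a b Ha Hb.
  assert (Ha1 : a < di) by (eapply Rlt_le_trans; [apply Ha| apply Rmin_l]).
  assert (Ha2 : a < dM/(2*(1+K))) by (eapply Rlt_le_trans; [apply Ha| eapply Rle_trans; [apply Rmin_r|apply Rmin_l]]).
  assert (Ha3 : a < (1-r)/(2*(1+K))) by (eapply Rlt_le_trans; [apply Ha| eapply Rle_trans; [apply Rmin_r|apply Rmin_r]]).
  assert (Ha2' : (1+K)*a < dM/2).
  { apply Rmult_lt_compat_l with (r := 1+K) in Ha2; [|lra]. 
    replace ((1+K) * (dM / (2*(1+K)))) with (dM/2) in Ha2 by (field; lra). lra. }
  assert (Ha3' : (1+K)*a < (1-r)/2).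
  { apply Rmult_lt_compat_l with (r := 1+K) in Ha3; [|lra]. 
    replace ((1+K) * ((1-r) / (2*(1+K)))) with ((1-r)/2) in Ha3 by (field; lra). lra. }
  destruct (Hin a (conj (proj1 Ha) Ha1)) as [HP _].
  apply NNPP; intro HZ.
  destruct (crossing E (r*n1 + a*n1, r*n2 + a*n2) (b*n2, -b*n1) Hop HP) as [l [Hl Hbd]].
  { unfold padd; simpl. replace (r * n2 + a * n2 + - b * n1) with (r * n2 + a * n2 - b * n1) by ring. auto. }
  unfold padd, pscal in Hbd; simpl in Hbd.
  set (y := (r * n1 + a * n1 + l * (b * n2), r * n2 + a * n2 + l * (- b * n1))) in Hbd.
  set (b' := l * b).
  assert (Hb' : Rabs b' <= K * a).
  { unfold b'. rewrite Rabs_mult. apply Rle_trans with (1 * Rabs b); [|lra].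
    apply Rmult_le_compat_r; [apply Rabs_pos|]. rewrite Rabs_right; lra. }
  assert (Hb'2 : b' * b' <= (K*a)*(K*a)).
  { revert Hb'; unfold Rabs; destruct (Rcase_abs b'); intros; nra. }
  assert (HU : inU y).
  { unfold inU. apply pn_lt; [lra|].
    replace (dot y y) with (((r+a)*(r+a) + b'*b')*(n1*n1+n2*n2)) by (unfold y, dot, b'; simpl; ring).
    rewrite Hn. assert (0 < (1+K)*a) by nra.
    assert (0 <= (r+a)*(K*a)) by (apply Rmult_le_pos; nra).
    assert ((r+a)*(r+a) + b'*b' <= (r + (1+K)*a)*(r + (1+K)*a)) by nra.
    assert ((r + (1+K)*a)*(r + (1+K)*a) < 1) by nra. lra. }
  assert (Hd : dot (psub y (r*n1, r*n2)) (psub y (r*n1, r*n2)) = a*a + b'*b').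
  { replace (dot (psub y (r*n1, r*n2)) (psub y (r*n1, r*n2))) with ((a*a + b'*b')*(n1*n1+n2*n2))
      by (unfold y, dot, psub, b'; simpl; ring). rewrite Hn; ring. }
  assert (Hd1 : a <= Defs.dist y (r*n1, r*n2)) by (apply pn_ge; [lra|]; rewrite Hd; nra).
  assert (Hd2 : Defs.dist y (r*n1, r*n2) <= (1+K)*a) by (apply pn_le; [nra|]; rewrite Hd; nra).
  assert (Hd3 : 0 < Defs.dist y (r*n1, r*n2) < dM) by lra.
  specialize (HM y (conj Hbd HU) Hd3).
  replace (dot (psub y (r * n1, r * n2)) (n1, n2)) with (a*(n1*n1+n2*n2)) in HM
    by (unfold y, dot, psub; simpl; ring).
  rewrite Hn, Rmult_1_r, Rabs_right in HM by lra.
  assert (/ (2 * (1 + K)) * Defs.dist y (r * n1, r * n2) <= a/2); [|lra].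
  apply Rle_trans with (/ (2 * (1 + K)) * ((1+K)*a)).
  apply Rmult_le_compat_l; lra. right; field; lra. }
set (a0 := Rmin (di/2) (r*n2*n2)).
assert (Hrn : 0 < r*n2*n2) by (repeat apply Rmult_lt_0_compat; lra).
assert (Ha0 : 0 < a0) by (unfold a0; apply Rmin_glb_lt; lra).
assert (Ha0d : a0 < di) by (assert (a0 <= di/2) by apply Rmin_l; lra).
assert (Ha0r : a0 <= r*n2*n2) by apply Rmin_r.
destruct (Hin a0 (conj Ha0 Ha0d)) as [HP0 _].
assert (Hne : (r * n1 + a0 * n1, r * n2 + a0 * n2) <> (0,0)).
{ intro e; injection e; intros. nra. }
assert (HW := Hsym _ HP0 Hne). simpl in HW.
set (k := - a0*n1*n1 + (2*r+a0)*n2*n2).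
assert (Hk : 0 < k) by (unfold k; nra).
set (m := -2*(r+a0)*n1*n2).
set (K := 2 * Rabs m / k + 1).
assert (HK : 0 < K) by (unfold K; assert (0 <= 2 * Rabs m / k) by (unfold Rdiv; apply Rmult_le_pos; [assert (0 <= Rabs m) by apply Rabs_pos; lra| left; apply Rinv_0_lt_compat; lra]); lra).
destruct (cone K HK) as [a1 [Ha1 Hcone]].
set (mu := Rmin (a1/k) (di/k)).
assert (Hmu : 0 < mu) by (apply Rmin_glb_lt; apply Rdiv_lt_0_compat; lra).
assert (Hmu1 : mu * k <= a1) by (assert (mu <= a1/k) by apply Rmin_l; 
   apply Rmult_le_compat_r with (r:=k) in H; [|lra]; replace (a1/k*k) with a1 in H by (field; lra); lra).
assert (Hmu2 : mu * k <= di) by (assert (mu <= di/k) by apply Rmin_r; 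
   apply Rmult_le_compat_r with (r:=k) in H; [|lra]; replace (di/k*k) with di in H by (field; lra); lra).
set (u := mu*k/(2*(1+mu))).
set (lam := /(1+mu)).
assert (Hu : 0 < u < di).
{ unfold u. split. apply Rdiv_lt_0_compat; nra.
  apply Rle_lt_trans with (mu*k/2). apply Rmult_le_compat_l; [nra|].
  apply Rinv_le_contravar; lra. lra. }
assert (Hlam : 0 <= lam <= 1).
{ unfold lam. split. left; apply Rinv_0_lt_compat; lra. rewrite <- Rinv_1. apply Rinv_le_contravar; lra. }
assert (HaZ : 0 < mu*k/2 < a1) by nra.
assert (HbZ : Rabs (mu*m) <= K*(mu*k/2)).
{ rewrite Rabs_mult, (Rabs_right mu) by lra.
  replace (K*(mu*k/2)) with (mu * Rabs m + mu*k/2) by (unfold K; field; lra). nra. }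
assert (HZ := Hcone _ _ HaZ HbZ).
assert (Hc := Hconv _ _ _ HZ HW Hlam).
destruct (Hin u Hu) as [_ Hnot]. apply Hnot.
replace (r * n1 - u * n1, r * n2 - u * n2) with
  (padd (pscal lam (r * n1 + mu * k / 2 * n1 + mu * m * n2, r * n2 + mu * k / 2 * n2 - mu * m * n1))
      (pscal (1 - lam) (r * n1 + a0 * n1, - (r * n2 + a0 * n2)))); auto.
assert (Hl : lam * (1+mu) = 1) by (unfold lam; field; lra).
assert (Hu' : u * (2*(1+mu)) = mu * k) by (unfold u; field; lra).
clearbody lam u. unfold k, m in *. clearbody a0 mu. clear -Hl Hu' Hn.
assert (2 * / 2 = 1) by (apply Rinv_r; discrR).
unfold padd, pscal; simpl. unfold Rdiv. f_equal; nsatz.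
Qed.

Theorem mainTheorem6 (E : pt -> Prop) :
  (forall y, E y -> inU y) ->
  open2 E ->
  C11_curve (bdryU E) ->
  (forall y, (E y /\ y <> (0, 0)) <-> Esc E y) ->
  forall (x : pt) (t n : pt) (sigma : R),
    bdryU E x -> x <> (0, 0) -> snd x > 0 ->
    (* t(x) unit tangent, n(x) inner unit normal, {t, n} positively oriented *)
    pnorm t = 1 -> n = (- snd t, fst t) ->
    normal_at (bdryU E) x n -> inner_dir E x n ->
    (* sigma(x): angle from the position vector x to t(x) *)
    t = rot sigma (pscal (/ pnorm x) x) ->
    sin sigma = -1 ->
    ~ convex2 E.
Proof.
intros HU Hop _ Hsc x t n sigma Hbx Hx0 Hx2 _ Hn Hnorm Hin Ht Hs.
destruct x as [x1 x2]. simpl in Hx2.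
assert (Hrr : pnorm (x1,x2) * pnorm (x1,x2) = x1*x1 + x2*x2).
{ unfold pnorm. rewrite sqrt_sqrt; unfold dot; simpl; nra. }
assert (Hr : 0 < pnorm (x1,x2)).
{ unfold pnorm. apply sqrt_lt_R0. unfold dot; simpl; nra. }
assert (Hr1 : pnorm (x1,x2) < 1) by (apply Hbx).
set (r := pnorm (x1,x2)) in *.
assert (Hc : cos sigma = 0).
{ assert (H := sin2_cos2 sigma). rewrite Hs in H. unfold Rsqr in H. nra. }
set (n1 := / r * x1). set (n2 := / r * x2).
assert (E1 : (x1, x2) = (r*n1, r*n2)) by (unfold n1, n2; f_equal; field; lra).
assert (E2 : n = (n1, n2)).
{ rewrite Hn, Ht. unfold rot, pscal; simpl. rewrite Hc, Hs. unfold n1, n2. f_equal; ring. }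
rewrite E2, E1 in *.
apply (core E r n1 n2); auto.
- unfold n1, n2. replace (/ r * x1 * (/ r * x1) + / r * x2 * (/ r * x2)) with ((x1*x1+x2*x2)/(r*r)) by (field; lra).
  rewrite <- Hrr. field. lra.
- unfold n2. apply Rmult_lt_0_compat; [apply Rinv_0_lt_compat|]; lra.
- apply sym; auto.
Qed.
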